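(* Let $f\in F$. Then $\ell(x_0^{-1}f)<\ell(f)$ if and only if one of the following holds: (1) the reduced forest diagram of $x_0^{-1}f$ has smaller support than that of $f$; (2) the left space of $f$ has label pair $(L,L)$; (3) the left space of $f$ has label pair $(L,I)$ and the current tree of $f$ is trivial.
   Context: Thompson's group $F$ is realized as the group of all orientation-preserving piecewise-linear homeomorphisms $f$ of $\mathbb R$ with finitely many breakpoints, all breakpoints having dyadic rational coordinates, all slopes integral powers of $2$, and with $f(t)=t-m$ for all sufficiently negative $t$ and $f(t)=t-n$ for all sufficiently positive $t$, for some integers $m,n$. Products are compositions of functions: $fg=f\circ g$. The generators are $x_0(t)=t-1$ and $x_1(t)=t$ for $t\le 0$, $x_1(t)=t/2$ for $0\le t\le 2$, $x_1(t)=t-1$ for $t\ge 2$. A forest diagram for $x_0^{-1}f$ is obtained from one for $f$ by moving the top pointer one tree to the left. Forest diagrams: a binary forest is a sequence $(T_i)_{i\in\mathbb Z}$ of finite rooted binary trees (every node has $0$ or $2$ children; internal nodes are called carets; a trivial tree is a single leaf), all but finitely many trivial, together with a pointer marking $T_0$. Tree $T_i$ represents the interval $[i,i+1]$, each caret represents halving the interval of its node, and the leaves of the forest give a dyadic subdivision of $\mathbb R$. A forest diagram for $f$ is a pair of binary forests, the bottom (domain) forest with subdivision $\mathcal D$ and the top (range) forest with subdivision $\mathcal R$, such that $f$ maps each interval of $\mathcal D$ linearly onto an interval of $\mathcal R$; this matches the leaves of the two forests by an order-preserving bijection, so the two forests share one linearly ordered set of leaves (columns). A reduction deletes an opposing pair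 of carets, i.e. a top caret and a bottom caret both of whose children are leaves and which have the same two (matched) leaves. A forest diagram is reduced if no reduction is possible; every element of $F$ has a unique reduced forest diagram. The support of a forest diagram is the smallest set of consecutive columns containing all leaves of nontrivial trees of either forest and the leaves of the two trees marked by the two pointers. A space is a gap between two consecutive columns; the spaces in the support are the gaps between consecutive columns of the support. The current tree of $f$ is the tree of the top forest (of the reduced diagram) marked by the top pointer; the right (resp. left) space of $f$ is the space immediately to the right (resp. left) of the current tree. Labels: in each of the two forests separately (using that forest's own pointer), a space is interior if the leaves on both sides of it belong to the same tree and exterior otherwise; it lies immediately to the left of a caret $c$ of that forest if the leaf immediately to its right is the leftmost leaf descending from $c$. Each space of the support receives a label in each forest: $L$ if it is exterior and to the left of the tree marked by the pointer; otherwise $N$ if it lies immediately to the left of some caret; otherwise $R$ if it is exterior (hence to the right of the marked tree); otherwise $I$ (interior). A space thus has a label pair (top label, bottom label); spaces outside the support are unlabeled. Weights, by (top, bottom): $(L,L)=2$, $(L,N)=1$, $(L,R)=1$, $(L,I)=1$; $(N,L)=1$, $(N,N)=2$, $(N,R)=2$, $(N,I)=2$; $(R,L)=1$, $(R,N)=2$, $(R,R)=2$, $(R,I)=0$; $(I,L)=1$, $(I,N)=2$, $(I,R)=0$, $(I,I)=0$. For $f\in F$, $\ell(f)=\ell_0(f)+\ell_1(f)$, where $\ell_0(f)$ is the sum of the weights of the spaces in the support of the reduced forest diagram of $f$ and $\ell_1(f)$ is its total number of carets; $\ell(f)$ equals the word length of $f$ with respect to $\{x_0,x_1\}$. *)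

(* Defs.v *)
From mathcomp Require Import all_boot.
Set Implicit Arguments. Unset Strict Implicit. Unset Printing Implicit Defensive.

Inductive tree := Leaf | Node of tree & tree.

Definition is_trivial (t : tree) : bool := if t is Leaf then true else false.

Fixpoint nleaves (t : tree) : nat :=
  match t with Leaf => 1 | Node l r => nleaves l + nleaves r end.

Fixpoint ncarets (t : tree) : nat :=
  match t with Leaf => 0 | Node l r => (ncarets l + ncarets r).+1 end.

(* For each leaf (left to right): is it the leftmost leaf descending
   from some caret of the tree? *)
Fixpoint caret_flags (t : tree) : seq bool :=
  match t with
  | Leaf => [:: false]
  | Node l r => true :: (behead (caret_flags l) ++ caret_flags r)
  end.

(* Left-leaf positions (offset by [off]) of the carets both of whose
   children are leaves. *)
Fixpoint simple_carets (t : tree) (off : nat) : seq nat :=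
  match t with
  | Leaf => [::]
  | Node Leaf Leaf => [:: off]
  | Node l r => simple_carets l off ++ simple_carets r (off + nleaves l)
  end.

(* A finite window [T_a, ..., T_b] of a binary forest, as a list of   *)
(* trees; all trees outside the window are trivial.  Columns (leaves) *)
(* of the window are numbered 0, 1, ..., left to right.               *)
Definition forest := seq tree.

Definition forest_leaves (F : forest) : nat := sumn (map nleaves F).

Definition tree_start (F : forest) (i : nat) : nat := forest_leaves (take i F).

Definition tree_of_col (F : forest) : seq nat :=
  flatten [seq nseq (nleaves (nth Leaf F i)) i | i <- iota 0 (size F)].

Definition forest_caret_flags (F : forest) : seq bool :=
  flatten (map caret_flags F).

Definition forest_simple_carets (F : forest) : seq nat :=
  flatten [seq simple_carets (nth Leaf F i) (tree_start F i) | i <- iota 0 (size F)].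

Definition forest_carets (F : forest) : nat := sumn (map ncarets F).

(* Forest diagrams.  [bot] / [top] are windows of the bottom (domain)  *)
(* and top (range) forests, aligned so that their columns coincide:   *)
(* column k of the bottom window is matched with column k of the top  *)
(* window, and the (trivial) leaves outside the windows are matched   *)
(* order-preservingly.  [bptr] / [tptr] are the window indices of the *)
(* trees marked by the bottom / top pointer.                          *)
Record fdiag := FDiag { bot : forest; top : forest; bptr : nat; tptr : nat }.

Definition ncols (D : fdiag) : nat := forest_leaves (bot D).

Definition wf_fdiag (D : fdiag) : bool :=
  [&& forest_leaves (bot D) == forest_leaves (top D),
      bptr D < size (bot D) & tptr D < size (top D)].

(* reduced: no top caret and bottom caret, both with two leaf children,
   having the same two (matched) leaves *)
Definition reduced (D : fdiag) : bool :=
  ~~ has (fun c => c \in forest_simple_carets (top D)) (forest_simple_carets (bot D)).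

(* x0^{-1} f : move the top pointer one tree to the left (enlarging the
   windows by one trivial tree on the left if needed). *)
Definition x0inv (D : fdiag) : fdiag :=
  if tptr D is t.+1 then FDiag (bot D) (top D) (bptr D) t
  else FDiag (Leaf :: bot D) (Leaf :: top D) (bptr D).+1 0.

Definition col_marked (F : forest) (p c : nat) : bool :=
  let i := nth 0 (tree_of_col F) c in ~~ is_trivial (nth Leaf F i) || (i == p).

Definition supp_cols (D : fdiag) : seq nat :=
  [seq c <- iota 0 (ncols D) | col_marked (bot D) (bptr D) c || col_marked (top D) (tptr D) c].

Definition supp_min (D : fdiag) : nat := head 0 (supp_cols D).
Definition supp_max (D : fdiag) : nat := last 0 (supp_cols D).

(* the size of the support, measured by its number of spaces
   (= number of columns - 1) *)
Definition supp_size (D : fdiag) : nat := supp_max D - supp_min D.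

(* space number c = the gap between columns c and c+1 *)
Definition in_support (D : fdiag) (c : nat) : bool := supp_min D <= c < supp_max D.

Inductive lab := LabL | LabN | LabR | LabI.

Definition forest_label (F : forest) (p c : nat) : lab :=
  let tc := tree_of_col F in
  let exterior := nth 0 tc c != nth 0 tc c.+1 in
  if exterior && (c.+1 <= tree_start F p) then LabL
  else if nth false (forest_caret_flags F) c.+1 then LabN
  else if exterior then LabR
  else LabI.

(* (top label, bottom label) of a space; None if outside the support *)
Definition space_label (D : fdiag) (c : nat) : option (lab * lab) :=
  if in_support D c
  then Some (forest_label (top D) (tptr D) c, forest_label (bot D) (bptr D) c)
  else None.

Definition weight (tb : lab * lab) : nat :=
  match tb with
  | (LabL, LabL) => 2 | (LabL, LabN) => 1 | (LabL, LabR) => 1 | (LabL, LabI) => 1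
  | (LabN, LabL) => 1 | (LabN, LabN) => 2 | (LabN, LabR) => 2 | (LabN, LabI) => 2
  | (LabR, LabL) => 1 | (LabR, LabN) => 2 | (LabR, LabR) => 2 | (LabR, LabI) => 0
  | (LabI, LabL) => 1 | (LabI, LabN) => 2 | (LabI, LabR) => 0 | (LabI, LabI) => 0
  end.

Definition ell0 (D : fdiag) : nat :=
  sumn [seq weight (forest_label (top D) (tptr D) c, forest_label (bot D) (bptr D) c)
       | c <- index_iota (supp_min D) (supp_max D)].

Definition ell1 (D : fdiag) : nat := forest_carets (bot D) + forest_carets (top D).

Definition ell (D : fdiag) : nat := ell0 D + ell1 D.

Definition current_tree (D : fdiag) : tree := nth Leaf (top D) (tptr D).

Definition left_space_label (D : fdiag) : option (lab * lab) :=
  if tree_start (top D) (tptr D) is s.+1 then space_label D s else None.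

(* Main.v *)
Require Import Defs.
From mathcomp Require Import all_boot zify.
Set Implicit Arguments. Unset Strict Implicit. Unset Printing Implicit Defensive.
Lemma head_filter_iota n (P : pred nat) m : m < n -> P m ->
  (forall c, c < m -> ~~ P c) -> head 0 (filter P (iota 0 n)) = m.
Proof.
move=> Hmn Pm Hlt.
have -> : n = m + (n - m.+1).+1 by lia.
rewrite iotaD filter_cat add0n.
have -> : filter P (iota 0 m) = [::].
  rewrite (@eq_in_filter _ _ pred0) ?filter_pred0 // => c.
  by rewrite mem_iota add0n => /andP[_ /Hlt /negbTE].
by rewrite /= Pm.
Qed.

Lemma last_filter_iota n (P : pred nat) m : m < n -> P m ->
  (forall c, m < c < n -> ~~ P c) -> last 0 (filter P (iota 0 n)) = m.
Proof.
move=> Hmn Pm Hgt.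
have -> : n = (m + 1) + (n - m.+1) by lia.
rewrite iotaD filter_cat add0n.
have -> : filter P (iota (m+1) (n - m.+1)) = [::].
  rewrite (@eq_in_filter _ _ pred0) ?filter_pred0 // => c.
  rewrite mem_iota => /andP[H1 H2]; apply/negbTE; apply: Hgt; lia.
by rewrite cats0 iotaD filter_cat /= Pm last_cat.
Qed.

Lemma min_ex n (P : pred nat) c0 : c0 < n -> P c0 ->
  exists m, [/\ m < n, P m, head 0 (filter P (iota 0 n)) = m &
     forall c, c < n -> P c -> m <= c].
Proof.
move=> Hc Pc.
have exP : exists c, (c < n) && P c by exists c0; rewrite Hc Pc.
case: (ex_minnP exP) => m /andP[Hm Pm] Hmin.
exists m; split=> //.
  apply: head_filter_iota => // c Hcm; apply/negP=> Pc'.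
  have := Hmin c; rewrite Pc' andbT; move=> /(_ (ltn_trans Hcm Hm)); lia.
by move=> c H1 H2; apply: Hmin; rewrite H1 H2.
Qed.

Lemma max_ex n (P : pred nat) c0 : c0 < n -> P c0 ->
  exists m, [/\ m < n, P m, last 0 (filter P (iota 0 n)) = m &
     forall c, c < n -> P c -> c <= m].
Proof.
move=> Hc Pc.
have exP : exists c, (c < n) && P c by exists c0; rewrite Hc Pc.
have ub : forall i, (i < n) && P i -> i <= n by move=> i /andP[H _]; lia.
case: (ex_maxnP exP ub) => m /andP[Hm Pm] Hmax.
exists m; split=> //.
  apply: last_filter_iota => // c /andP[H1 H2]; apply/negP=> Pc'.
  have := Hmax c; rewrite Pc' H2 => /(_ isT); lia.
by move=> c H1 H2; apply: Hmax; rewrite H1 H2.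
Qed.

Lemma sum_split (f : nat -> nat) a k b : a <= k < b ->
  sumn [seq f c | c <- index_iota a b] =
  sumn [seq f c | c <- index_iota a k] + f k + sumn [seq f c | c <- index_iota k.+1 b].
Proof.
move=> /andP[H1 H2]; rewrite /index_iota.
have -> : b - a = (k - a) + (b - k.+1).+1 by lia.
rewrite iotaD map_cat sumn_cat /=.
have -> : a + (k - a) = k by lia.
lia.
Qed.

Lemma sum_eq (f g : nat -> nat) a b : (forall c, a <= c < b -> f c = g c) ->
  sumn [seq f c | c <- index_iota a b] = sumn [seq g c | c <- index_iota a b].
Proof.
move=> H; congr sumn; apply/eq_in_map => c; rewrite mem_index_iota; exact: H.
Qed.

Lemma index_iota_nil a : index_iota a a = [::].
Proof. by rewrite /index_iota subnn. Qed.

Lemma key n k (P P' : pred nat) (w w' : nat -> nat) :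
  k.+1 < n -> P k.+1 -> P' k ->
  (forall c, c < n -> c != k -> c != k.+1 -> P c = P' c) ->
  (forall c, c != k -> w c = w' c) -> 0 < w k ->
  (sumn [seq w' c | c <- index_iota (head 0 (filter P' (iota 0 n))) (last 0 (filter P' (iota 0 n)))]
   < sumn [seq w c | c <- index_iota (head 0 (filter P (iota 0 n))) (last 0 (filter P (iota 0 n)))])
  <-> (last 0 (filter P' (iota 0 n)) - head 0 (filter P' (iota 0 n))
        < last 0 (filter P (iota 0 n)) - head 0 (filter P (iota 0 n)))
      \/ ((head 0 (filter P (iota 0 n)) <= k < last 0 (filter P (iota 0 n))) /\ w' k < w k).
Proof.
move=> Hkn Pk P'k HPP Hww wk.
have Hk : k < n by lia.
case: (min_ex Hkn Pk) => m [Hm Pm -> Hmin].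
case: (max_ex Hkn Pk) => M [HM PM -> Hmax].
case: (min_ex Hk P'k) => m' [Hm' Pm' -> Hmin'].
case: (max_ex Hk P'k) => M' [HM' PM' -> Hmax'].
have mk : m <= k.+1 by apply: Hmin.
have Mk : k.+1 <= M by apply: Hmax.
have mk' : m' <= k by apply: Hmin'.
have Mk' : k <= M' by apply: Hmax'.
have E1 : m <= k -> m' = m.
  move=> Hmk; apply/eqP; rewrite eqn_leq; apply/andP; split.
    case: (ltnP m k) => Hmk2; last by have -> : m = k by lia.
    apply: Hmin' => //; rewrite -HPP //; lia.
  case: (ltnP m' k) => Hmk2; last by lia.
  apply: Hmin => //; rewrite HPP //; lia.
have E2 : m = k.+1 -> m' = k.
  move=> Hmk; apply/eqP; rewrite eqn_leq mk' /=.
  case: (ltnP m' k) => // Hlt.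
  have : m <= m' by apply: Hmin => //; rewrite HPP //; lia.
  lia.
have E3 : k.+2 <= M -> M' = M.
  move=> HkM; apply/eqP; rewrite eqn_leq; apply/andP; split.
    case: (ltnP k.+1 M') => Hlt; last by lia.
    apply: Hmax => //; rewrite HPP //; lia.
  apply: Hmax' => //; rewrite -HPP //; lia.
have E4 : M = k.+1 -> M' <= k.+1.
  move=> HM1; case: (ltnP k.+1 M') => // Hlt.
  have : M' <= M by apply: Hmax => //; rewrite HPP //; lia.
  lia.
have Hs : forall a b, k < a \/ b <= k ->
   sumn [seq w c | c <- index_iota a b] = sumn [seq w' c | c <- index_iota a b].
  move=> a b Hab; apply: sum_eq => c Hc; apply: Hww; apply/eqP; lia.
case: (leqP m k) => Hmk.
- have := E1 Hmk => ->.
  case: (leqP k.+2 M) => HkM.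
  + rewrite (E3 HkM) (sum_split w (k:=k)); last by apply/andP; split; lia.
    rewrite (sum_split w' (k:=k)); last by apply/andP; split; lia.
    rewrite (Hs m k); last lia. rewrite (Hs k.+1 M); last lia.
    split; [move=> H; right; split; lia | case; lia].
  + have HM1 : M = k.+1 by lia.
    subst M.
    have := E4 erefl; case: (ltnP M' k.+1) => HM'' _.
    * have -> : M' = k by lia.
      rewrite (sum_split w (k:=k)); last by apply/andP; split; lia.
      rewrite (Hs m k); last by lia.
      rewrite index_iota_nil /=.
      split=> _; [left; lia | lia].
    * have -> : M' = k.+1 by lia.
      rewrite (sum_split w (k:=k)); last by apply/andP; split; lia.
      rewrite (sum_split w' (k:=k)); last by apply/andP; split; lia.
      rewrite (Hs m k); last by lia.
      rewrite index_iota_nil /=.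
      split; [move=> H; right; split; lia | case; lia].
- have Hm1 : m = k.+1 by lia.
  rewrite (E2 Hm1) Hm1.
  case: (leqP k.+2 M) => HkM.
  + rewrite (E3 HkM) (sum_split w' (k:=k)); last by apply/andP; split; lia.
    rewrite index_iota_nil /= -(Hs k.+1 M); last by lia.
    split; [lia | case; lia].
  + have HM1 : M = k.+1 by lia.
    rewrite HM1 /index_iota subnn /=.
    split; [lia | case; lia].
Qed.

Lemma nleaves_gt0 t : 0 < nleaves t.
Proof. elim: t => //= l Hl r Hr; lia. Qed.

Lemma triv_nleaves t : is_trivial t = (nleaves t == 1).
Proof. case: t => //= l r; have := nleaves_gt0 l; have := nleaves_gt0 r; lia. Qed.

Lemma size_caret_flags t : size (caret_flags t) = nleaves t.
Proof.
elim: t => //= l Hl r Hr; rewrite size_cat size_behead Hl Hr.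
have := nleaves_gt0 l; lia.
Qed.

Lemma toc_cons t F : tree_of_col (t::F) = nseq (nleaves t) 0 ++ map succn (tree_of_col F).
Proof.
rewrite /tree_of_col /= map_flatten -map_comp.
rewrite -[1]/(1 + 0) iotaDl -map_comp.
congr (_ ++ flatten _); apply: eq_map => i /=.
by rewrite map_nseq.
Qed.

Lemma size_toc F : size (tree_of_col F) = forest_leaves F.
Proof.
elim: F => [|t F IH]; first by [].
by rewrite toc_cons size_cat size_nseq size_map IH.
Qed.

Lemma ts_cons t F i : tree_start (t::F) i.+1 = nleaves t + tree_start F i.
Proof. by []. Qed.

Lemma ts0 F : tree_start F 0 = 0.
Proof. by rewrite /tree_start take0. Qed.

Lemma ts1 t F : tree_start (t::F) 1 = nleaves t.
Proof. by rewrite ts_cons ts0 addn0. Qed.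

Lemma ts_S F i : i < size F -> tree_start F i.+1 = tree_start F i + nleaves (nth Leaf F i).
Proof.
elim: F i => [|t F IH] [|i] //=.
  by move=> _; rewrite /tree_start /forest_leaves /= take0 /= addn0.
move=> Hi; rewrite ts_cons IH // ts_cons; lia.
Qed.

Lemma ts_le F i : tree_start F i <= forest_leaves F.
Proof.
elim: F i => [|t F IH] i; first by rewrite /tree_start; case: i.
case: i => [|i]; first by rewrite /tree_start take0.
rewrite ts_cons /forest_leaves /= -/(forest_leaves F); have := IH i; lia.
Qed.

Lemma toc_nth F i c : i < size F -> tree_start F i <= c < tree_start F i.+1 ->
  nth 0 (tree_of_col F) c = i.
Proof.
elim: F i c => [|t F IH] i c //= Hi.
rewrite toc_cons nth_cat size_nseq.
case: i Hi => [|i] Hi.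
  move=> /andP[_ H]; rewrite nth_nseq.
  move: H; rewrite /tree_start /= take0 /= => H.
  move: H; rewrite /forest_leaves /= addn0 => H. by rewrite H.
rewrite !ts_cons => /andP[H1 H2].
have -> : (c < nleaves t) = false by lia.
rewrite (nth_map 0).
  by rewrite (IH i) //; lia.
rewrite size_toc; have := ts_le F i.+1; lia.
Qed.

Lemma toc_ex F c : c < forest_leaves F ->
  exists2 i, i < size F & tree_start F i <= c < tree_start F i.+1.
Proof.
elim: F c => [|t F IH] c //=.
rewrite /forest_leaves /= -/(forest_leaves F) => Hc.
case: (ltnP c (nleaves t)) => Hct.
  by exists 0 => //; rewrite ts0 ts1; lia.
case: (IH (c - nleaves t)); first by lia.
move=> i Hi Hr; exists i.+1 => //; rewrite !ts_cons; lia.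
Qed.

Lemma cf_nth F i : i < size F ->
  nth false (forest_caret_flags F) (tree_start F i) = ~~ is_trivial (nth Leaf F i).
Proof.
elim: F i => [|t F IH] i //=.
rewrite /forest_caret_flags /= -/(forest_caret_flags F) nth_cat size_caret_flags.
case: i => [|i] Hi.
  rewrite ts0; have -> : 0 < nleaves t by apply: nleaves_gt0.
  by case: t.
rewrite ts_cons; have -> : (nleaves t + tree_start F i < nleaves t) = false by lia.
rewrite -(IH i) //; congr nth; lia.
Qed.

Section Move.
Variables (F : forest) (q : nat).
Hypothesis Hq : q.+1 < size F.
Local Notation s := (tree_start F q.+1).

Lemma s_facts : [/\ s = tree_start F q + nleaves (nth Leaf F q),
   tree_start F q.+2 = s + nleaves (nth Leaf F q.+1),
   tree_start F q < s, s < forest_leaves F &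
   tree_start F q.+2 <= forest_leaves F].
Proof.
have h1 := ts_S (ltnW Hq); have h2 := ts_S Hq.
have := nleaves_gt0 (nth Leaf F q); have := nleaves_gt0 (nth Leaf F q.+1).
have := ts_le F q.+2.
split; lia.
Qed.

Lemma toc_sm1 : nth 0 (tree_of_col F) s.-1 = q.
Proof. case: s_facts => h1 h2 h3 h4 h5; apply: toc_nth; [lia | lia]. Qed.

Lemma toc_s : nth 0 (tree_of_col F) s = q.+1.
Proof. case: s_facts => h1 h2 h3 h4 h5; have := nleaves_gt0 (nth Leaf F q.+1) => hh; apply: toc_nth => //; lia. Qed.

Lemma label_move c : c != s.-1 -> forest_label F q c = forest_label F q.+1 c.
Proof.
move=> Hc; rewrite /forest_label.
case: s_facts => h1 h2 h3 h4 h5.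
set e := (nth 0 (tree_of_col F) c != nth 0 (tree_of_col F) c.+1).
suff -> : e && (c.+1 <= tree_start F q) = e && (c.+1 <= tree_start F q.+1) by [].
case: (leqP c.+1 (tree_start F q)) => H1.
  by rewrite (leq_trans H1) ?andbT //; lia.
case: (leqP c.+1 (tree_start F q.+1)) => H2; last by rewrite !andbF.
have -> : e = false; last by [].
rewrite /e (toc_nth (i:=q) (c:=c)); try (apply/andP; split); try lia.
rewrite (toc_nth (i:=q) (c:=c.+1)) ?eqxx //; try (apply/andP; split); try lia.
Qed.

Lemma label_old : forest_label F q.+1 s.-1 = LabL.
Proof.
case: s_facts => h1 h2 h3 h4 h5.
rewrite /forest_label toc_sm1 (_ : s.-1.+1 = s); last by lia.
rewrite toc_s (_ : (q != q.+1) = true) ?leqnn //; lia.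
Qed.

Lemma label_new : forest_label F q s.-1 =
   if is_trivial (nth Leaf F q.+1) then LabR else LabN.
Proof.
case: s_facts => h1 h2 h3 h4 h5.
rewrite /forest_label toc_sm1 (_ : s.-1.+1 = s); last by lia.
rewrite toc_s (_ : (q != q.+1) = true); last by lia.
have -> : (s <= tree_start F q) = false by lia.
rewrite cf_nth //.
by case: (is_trivial _).
Qed.

Lemma marked_move c : c < forest_leaves F -> c != s.-1 -> c != s ->
  col_marked F q.+1 c = col_marked F q c.
Proof.
move=> Hc H1 H2; case: s_facts => h1 h2 h3 h4 h5.
case: (toc_ex Hc) => i Hi Hr.
rewrite /col_marked (toc_nth Hi Hr).
have := ts_S Hi; have := triv_nleaves (nth Leaf F i).
case: (eqVneq i q.+1) => [Ei|Hip].
  subst i; move=> Ht Hs.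
  have -> : is_trivial (nth Leaf F q.+1) = false by rewrite Ht; apply/negbTE; lia.
  by [].
case: (eqVneq i q) => [Ei|Hiq].
  subst i; move=> Ht Hs.
  have -> : is_trivial (nth Leaf F q) = false by rewrite Ht; apply/negbTE; lia.
  by [].
by [].
Qed.

Lemma marked_p : col_marked F q.+1 s.
Proof. by rewrite /col_marked toc_s eqxx orbT. Qed.

Lemma marked_q : col_marked F q s.-1.
Proof. by rewrite /col_marked toc_sm1 eqxx orbT. Qed.

End Move.

Lemma or3E (P Q R : Prop) : [\/ P, Q | R] <-> P \/ Q \/ R.
Proof. by split; [case; tauto | case; [|case]; [constructor 1|constructor 2|constructor 3]]. Qed.

Lemma main_S b F bp q : wf_fdiag (FDiag b F bp q.+1) ->
  let D := FDiag b F bp q.+1 in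
  (ell (x0inv D) < ell D) <->
  [\/ supp_size (x0inv D) < supp_size D,
      left_space_label D = Some (LabL, LabL)
    | left_space_label D = Some (LabL, LabI) /\ current_tree D = Leaf].
Proof.
rewrite /wf_fdiag /= => /and3P[/eqP Hn _ Hq].
case: (s_facts Hq) => h1 h2 h3 h4 h5.
set s := tree_start F q.+1 in h1 h2 h3 h4 h5 *.
have Hs : s = s.-1.+1 by lia.
have LO : forest_label F q.+1 s.-1 = LabL := label_old Hq.
have LN : forest_label F q s.-1 = if is_trivial (nth Leaf F q.+1) then LabR else LabN := label_new Hq.
have K := @key (forest_leaves b) s.-1
  (fun c => col_marked b bp c || col_marked F q.+1 c)
  (fun c => col_marked b bp c || col_marked F q c)
  (fun c => weight (forest_label F q.+1 c, forest_label b bp c))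
  (fun c => weight (forest_label F q c, forest_label b bp c)).
rewrite /ell /ell1 /= ltn_add2r /ell0 /supp_size /supp_min /supp_max /supp_cols /ncols /=.
have G1 : s.-1.+1 < forest_leaves b by lia.
have G2 : col_marked b bp s.-1.+1 || col_marked F q.+1 s.-1.+1 by rewrite -Hs marked_p // orbT.
have G3 : col_marked b bp s.-1 || col_marked F q s.-1 by rewrite marked_q // orbT.
have G4 : forall c, c < forest_leaves b -> c != s.-1 -> c != s.-1.+1 ->
   col_marked b bp c || col_marked F q.+1 c = col_marked b bp c || col_marked F q c.
  move=> c Hc H1 H2; rewrite marked_move //; lia.
have G5 : forall c, c != s.-1 -> weight (forest_label F q.+1 c, forest_label b bp c) =
   weight (forest_label F q c, forest_label b bp c).
  by move=> c Hc; rewrite (label_move Hq Hc).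
have G6 : 0 < weight (forest_label F q.+1 s.-1, forest_label b bp s.-1).
  by rewrite LO; case: (forest_label b bp _).
rewrite (K G1 G2 G3 G4 G5 G6).
rewrite /left_space_label /current_tree /= -/s Hs /space_label /in_support /supp_min /supp_max /supp_cols /ncols /=.
rewrite -Hs LO LN.
set X := (_ <= s.-1) && _.
set A := (_ - _ < _ - _).
apply: (iff_trans _ (iff_sym (or3E _ _ _))).
case: X; case: (forest_label b bp s.-1); case: (nth Leaf F q.+1) => [|l r] /=;
  intuition (try discriminate; try lia).
Qed.

Lemma toc_leaf F : tree_of_col (Leaf :: F) = 0 :: map succn (tree_of_col F).
Proof. by rewrite toc_cons. Qed.

Lemma marked_shift F p c : c < forest_leaves F ->
  col_marked (Leaf :: F) p.+1 c.+1 = col_marked F p c.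
Proof.
move=> Hc; rewrite /col_marked toc_leaf /= (nth_map 0) ?size_toc //.
Qed.

Lemma marked_shift0 F p : col_marked (Leaf :: F) p.+1 0 = false.
Proof. by rewrite /col_marked toc_leaf. Qed.

Lemma label_shift F p c : c.+1 < forest_leaves F ->
  forest_label (Leaf :: F) p.+1 c.+1 = forest_label F p c.
Proof.
move=> Hc; rewrite /forest_label toc_leaf /=.
rewrite (nth_map 0) ?size_toc; last lia.
rewrite (nth_map 0) ?size_toc; last lia.
rewrite eqSS ts_cons /=.
by [].
Qed.

Lemma head_mapS (l : seq nat) : l != [::] -> head 0 (map succn l) = (head 0 l).+1.
Proof. by case: l. Qed.

Lemma last_mapS (l : seq nat) : l != [::] -> last 0 (map succn l) = (last 0 l).+1.
Proof. by case: l => //= x l _; rewrite last_map. Qed.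

Lemma index_iotaS m M : index_iota m.+1 M.+1 = map succn (index_iota m M).
Proof. by rewrite /index_iota subSS -[m.+1]/(1 + m) iotaDl. Qed.

Section Pad.
Variables (b F : forest) (bp tp : nat).
Hypothesis Hn : forest_leaves b = forest_leaves F.
Let D := FDiag b F bp tp.
Let D2 := FDiag (Leaf :: b) (Leaf :: F) bp.+1 tp.+1.

Lemma supp_pad : supp_cols D2 = map succn (supp_cols D).
Proof.
rewrite /supp_cols /ncols /= /forest_leaves /= -/(forest_leaves b).
rewrite add0n.
rewrite -[1]/(1 + 0) iotaDl filter_map.
congr map; apply: eq_in_filter => c; rewrite mem_iota add0n => Hc /=.
by rewrite /= !marked_shift // -Hn.
Qed.

Lemma supp_lt c : c \in supp_cols D -> c < forest_leaves b.
Proof. by rewrite mem_filter mem_iota add0n => /andP[_]. Qed.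

Lemma supp_size_pad : supp_size D2 = supp_size D.
Proof.
rewrite /supp_size /supp_min /supp_max supp_pad.
case E: (supp_cols D) => [|x l] //=.
by rewrite last_map subSS.
Qed.

Lemma ell_pad : ell D2 = ell D.
Proof.
rewrite /ell /ell1 /ell0 /supp_min /supp_max supp_pad.
have -> : forest_carets (Leaf :: b) = forest_carets b by [].
have -> : forest_carets (Leaf :: F) = forest_carets F by [].
congr (_ + _).
case E: (supp_cols D) => [|x l] //=.
rewrite last_map index_iotaS -map_comp.
congr sumn; apply/eq_in_map => c; rewrite mem_index_iota => /andP[_ Hc] /=.
have Hl : last x l < forest_leaves b.
  by apply: supp_lt; rewrite E mem_last.
rewrite !label_shift //; lia.
Qed.

End Pad.

Lemma lsl_pad b F bp : forest_leaves b = forest_leaves F ->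
  left_space_label (FDiag (Leaf :: b) (Leaf :: F) bp.+1 1) = left_space_label (FDiag b F bp 0).
Proof.
move=> Hn; rewrite /left_space_label [top _]/= [tptr _]/= ts1 ts0 /space_label /in_support /supp_min /supp_max (@supp_pad b F bp 0 Hn).
by case: (supp_cols _).
Qed.

Theorem corollary4p3p4 (D : fdiag) :
  wf_fdiag D -> reduced D ->
  (ell (x0inv D) < ell D) <->
  [\/ supp_size (x0inv D) < supp_size D,
      left_space_label D = Some (LabL, LabL)
    | left_space_label D = Some (LabL, LabI) /\ current_tree D = Leaf].
Proof.
case: D => b F bp [|q] Hwf _; last exact: main_S.
move: (Hwf); rewrite /wf_fdiag /= => /and3P[/eqP Hn Hb HF].
have Hwf2 : wf_fdiag (FDiag (Leaf :: b) (Leaf :: F) bp.+1 1).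
  by rewrite /wf_fdiag /= /forest_leaves /= -!/(forest_leaves _) Hn eqxx /=; lia.
have := main_S Hwf2.
rewrite /= (ell_pad _ _ Hn) (supp_size_pad _ _ Hn) (lsl_pad _ Hn); exact.
Qed.
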